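(* Let $\mathcal F$ be a TBF algorithm and $G$ a Tanner graph. Let $V_{\mathrm e}\subset V(G)$ be the set of initially corrupt variable nodes and $I$ the induced subgraph of $G$ on $V_{\mathrm e}$. If there is no subset $V_{\mathrm s}\subset V(G)$ with $V_{\mathrm s}\supset V_{\mathrm e}$ such that the induced subgraph of $G$ on $V_{\mathrm s}$ is isomorphic to a graph in $\mathscr E_I^{\mathrm r}(\mathcal F)$, then $\mathcal F$ run on $G$ with initially corrupt set $V_{\mathrm e}$ converges (reaches zero syndrome) within at most $l^{\mathrm m}_{\mathcal F}$ iterations.
   Context: Tanner graphs: a Tanner graph $G$ is a bipartite graph with variable nodes $V(G)$, check nodes $C(G)$ and edges $E(G)$; every variable node has degree $d_{\mathrm v}$ (fixed). A subgraph $U$ of $G$ has $V(U)\subset V(G)$, $C(U)\subset C(G)$, $E(U)\subset E(G)$; $G$ also ''contains'' any graph isomorphic to a subgraph. The induced subgraph on $V_{\mathrm s}\subset V(G)$ has variable nodes $V_{\mathrm s}$, all check nodes adjacent to $V_{\mathrm s}$, and all edges of $G$ incident to $V_{\mathrm s}$. Decoding setting: the all-zero codeword is sent over the binary symmetric channel; $\mathbf y$ is the received vector; $\hat{\mathbf x}^l$ is the decision vector after iteration $l$ (with $\hat{\mathbf x}^0=\mathbf y$), and $\mathbf s^l=\hat{\mathbf x}^lH^{\mathrm T}$ its syndrome ($H$ the biadjacency matrix). A variable node $v$ is initially corrupt if $y_v=1$. TBF algorithm $\mathcal F=(f,l^{\mathrm m}_{\mathcal F},\Delta_{\mathrm v},\Delta_{\mathrm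 c})$: variable node states lie in $\mathcal A_{\mathrm v}=\{0_{\mathrm s},0_{\mathrm w},1_{\mathrm w},1_{\mathrm s}\}$ (state $a_{\mathrm s}$ or $a_{\mathrm w}$ means decision bit $a$), check node states in $\mathcal A_{\mathrm c}=\{0_{\mathrm p},0_{\mathrm n},1_{\mathrm p},1_{\mathrm n}\}$. Initialization: $w^0_v=\Delta_{\mathrm v}(y_v)$ with $\Delta_{\mathrm v}(0)\in\{0_{\mathrm s},0_{\mathrm w}\}$, $\Delta_{\mathrm v}(1)\in\{1_{\mathrm s},1_{\mathrm w}\}$; $z^1_c=\Delta_{\mathrm c}(s^0_c)$ with $\Delta_{\mathrm c}(0)\in\{0_{\mathrm p},0_{\mathrm n}\}$, $\Delta_{\mathrm c}(1)\in\{1_{\mathrm p},1_{\mathrm n}\}$. For $l=1,2,\dots$, while the syndrome is nonzero and $l<l^{\mathrm m}_{\mathcal F}$: every variable node updates $w^l_v=f(w^{l-1}_v,\chi^l_{0_{\mathrm p}}(v),\chi^l_{0_{\mathrm n}}(v),\chi^l_{1_{\mathrm p}}(v),\chi^l_{1_{\mathrm n}}(v))$, where $\chi^l_a(v)$ is the number of neighboring check nodes $c$ with $z^l_c=a$; then every check node updates $z^{l+1}_c=\Phi(s^{l-1}_c,s^l_c)$ with $\Phi(0,0)=0_{\mathrm p},\Phi(0,1)=1_{\mathrm n},\Phi(1,0)=0_{\mathrm n},\Phi(1,1)=1_{\mathrm p}$. Here $f:\mathcal A_{\mathrm v}\times\Xi_{d_{\mathrm v}}\to\mathcal A_{\mathrm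 v}$, where $\Xi_{d_{\mathrm v}}$ is the set of 4-tuples of nonnegative integers summing to $d_{\mathrm v}$; $f$ is symmetric with respect to $0$ and $1$ and every variable-node state is reachable from every other. Failure: for a TBF algorithm $\mathcal F$, a Tanner graph $G$ and a set $V_{\mathrm e}$ of initially corrupt variable nodes with induced subgraph $I$, ''$\mathcal F$ fails on the subgraph $I$ of $G$'' means $\mathcal F$ run on $G$ with initially corrupt set $V_{\mathrm e}$ does not converge (does not reach zero syndrome) within $l^{\mathrm m}_{\mathcal F}$ iterations. Trapping sets: for a Tanner graph $I$, $\mathscr E_I(\mathcal F)$ is the set of Tanner graphs $S$ containing a subgraph $J$ isomorphic to $I$ such that $\mathcal F$ fails on $J$ of $S$. $S_1\in\mathscr E_I(\mathcal F)$, with $\mathcal F$ failing on its subgraph $J_1$, belongs to $\mathscr E_I^{\mathrm r}(\mathcal F)$ if there is no $S_2\in\mathscr E_I(\mathcal F)$ with a subgraph $J_2$ such that $\mathcal F$ fails on $J_2$ of $S_2$ and there is an isomorphism between $S_2$ and a proper subgraph of $S_1$ mapping $V(J_2)$ into $V(J_1)$. Elements of $\mathscr E_I^{\mathrm r}(\mathcal F)$ are trapping sets of $\mathcal F$ with inducing set $I$; $\mathscr E_I^{\mathrm r}(\mathcal F)$ is the trapping set profile with inducing set $I$. *)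

(* Defs.v *)
From HB Require Import structures.
From mathcomp Require Import all_boot.
Set Implicit Arguments. Unset Strict Implicit. Unset Printing Implicit Defensive.

Record tanner := Tanner {
  nv : nat;
  nc : nat;
  adj : 'I_nv -> 'I_nc -> bool
}.

Definition tanner_reg (dv : nat) (G : tanner) : Prop :=
  forall v : 'I_(nv G), #|[set c | adj v c]| = dv.

(* induced subgraph on Vs: variable nodes Vs, check nodes adjacent to Vs,
   all edges of G incident to Vs *)
Definition nbhd (G : tanner) (Vs : {set 'I_(nv G)}) : {set 'I_(nc G)} :=
  [set c | [exists v in Vs, adj v c]].

Definition induced (G : tanner) (Vs : {set 'I_(nv G)}) : tanner :=
  {| nv := #|Vs|; nc := #|nbhd Vs|;
     adj := fun i j => adj (enum_val i) (enum_val j) |}.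

Definition isomorphic (U W : tanner) : Prop :=
  exists (fV : 'I_(nv U) -> 'I_(nv W)) (fC : 'I_(nc U) -> 'I_(nc W)),
    bijective fV /\ bijective fC /\ forall v c, adj v c = adj (fV v) (fC c).

Definition embedding (U G : tanner)
    (fV : 'I_(nv U) -> 'I_(nv G)) (fC : 'I_(nc U) -> 'I_(nc G)) : Prop :=
  injective fV /\ injective fC /\ forall v c, adj v c -> adj (fV v) (fC c).

Definition embedding_full (U G : tanner)
    (fV : 'I_(nv U) -> 'I_(nv G)) (fC : 'I_(nc U) -> 'I_(nc G)) : Prop :=
  (forall v, exists v', fV v' = v) /\ (forall c, exists c', fC c' = c) /\
  (forall v c, adj v c ->
     exists v' c', [/\ fV v' = v, fC c' = c & adj v' c']).

Inductive vstate := V0s | V0w | V1w | V1s.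
Inductive cstate := C0p | C0n | C1p | C1n.

Definition vstate_eqb (a b : vstate) : bool :=
  match a, b with
  | V0s, V0s | V0w, V0w | V1w, V1w | V1s, V1s => true | _, _ => false end.
Lemma vstate_eqP : Equality.axiom vstate_eqb.
Proof. by case; case; constructor. Qed.
HB.instance Definition _ := hasDecEq.Build vstate vstate_eqP.

Definition cstate_eqb (a b : cstate) : bool :=
  match a, b with
  | C0p, C0p | C0n, C0n | C1p, C1p | C1n, C1n => true | _, _ => false end.
Lemma cstate_eqP : Equality.axiom cstate_eqb.
Proof. by case; case; constructor. Qed.
HB.instance Definition _ := hasDecEq.Build cstate cstate_eqP.

Definition vbit (a : vstate) : bool :=
  match a with V0s | V0w => false | V1w | V1s => true end.

Definition vflip (a : vstate) : vstate :=
  match a with V0s => V1s | V0w => V1w | V1w => V0w | V1s => V0s end.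

Definition Phi (s_old s_new : bool) : cstate :=
  match s_old, s_new with
  | false, false => C0p | false, true => C1n
  | true, false => C0n | true, true => C1p end.

(* F = (f, l^m, Delta_v, Delta_c).  f a n0p n0n n1p n1n is f(a, chi);
   only its values on tuples summing to d_v are ever used / constrained. *)
Record tbf := TBF {
  tbf_f : vstate -> nat -> nat -> nat -> nat -> vstate;
  tbf_lm : nat;
  tbf_dV : bool -> vstate;
  tbf_dC : bool -> cstate
}.

Definition in_Xi (dv n0p n0n n1p n1n : nat) : Prop := n0p + n0n + n1p + n1n = dv.

Definition tbf_step (dv : nat) (F : tbf) (a b : vstate) : Prop :=
  exists n0p n0n n1p n1n, in_Xi dv n0p n0n n1p n1n /\ tbf_f F a n0p n0n n1p n1n = b.

Inductive reach (dv : nat) (F : tbf) : vstate -> vstate -> Prop :=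
  | reach_one a b : tbf_step dv F a b -> reach dv F a b
  | reach_cons a b c : tbf_step dv F a b -> reach dv F b c -> reach dv F a c.

Definition tbf_valid (dv : nat) (F : tbf) : Prop :=
  [/\ tbf_dV F false \in [:: V0s; V0w],
      tbf_dV F true \in [:: V1s; V1w],
      tbf_dC F false \in [:: C0p; C0n]
    & tbf_dC F true \in [:: C1p; C1n]] /\
  (forall a n0p n0n n1p n1n, in_Xi dv n0p n0n n1p n1n ->
     tbf_f F (vflip a) n1p n1n n0p n0n = vflip (tbf_f F a n0p n0n n1p n1n)) /\
  (forall a b, a <> b -> reach dv F a b).

Definition syndrome (G : tanner) (x : 'I_(nv G) -> bool) (c : 'I_(nc G)) : bool :=
  odd #|[set v | adj v c & x v]|.

Definition chi (G : tanner) (z : 'I_(nc G) -> cstate) (v : 'I_(nv G)) (a : cstate) : nat :=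
  #|[set c | adj v c & z c == a]|.

(* run F G Ve l = (w^l, z^{l+1}, s^l) : variable states after iteration l,
   check states used in iteration l+1, syndrome after iteration l.
   (Computed without stopping; stopping does not change whether a zero
   syndrome is reached.) *)
Fixpoint run (F : tbf) (G : tanner) (Ve : {set 'I_(nv G)}) (l : nat) :
    ('I_(nv G) -> vstate) * ('I_(nc G) -> cstate) * ('I_(nc G) -> bool) :=
  match l with
  | 0 =>
      let w := fun v => tbf_dV F (v \in Ve) in
      let s := syndrome (fun v => vbit (w v)) in
      (w, (fun c => tbf_dC F (s c)), s)
  | l'.+1 =>
      let '(w, z, s) := run F Ve l' in
      let w' := fun v => tbf_f F (w v) (chi z v C0p) (chi z v C0n)
                                        (chi z v C1p) (chi z v C1n) in
      let s' := syndrome (fun v => vbit (w' v)) in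
      (w', (fun c => Phi (s c) (s' c)), s')
  end.

Definition syn_at (F : tbf) (G : tanner) (Ve : {set 'I_(nv G)}) (l : nat) :=
  (run F Ve l).2.

(* F run on G with initially corrupt set Ve reaches zero syndrome: the loop
   "while s != 0 and l < l^m" executes iterations 1 .. l^m - 1 at most. *)
Definition converges (F : tbf) (G : tanner) (Ve : {set 'I_(nv G)}) : Prop :=
  exists l, l <= (tbf_lm F).-1 /\ forall c, syn_at F Ve l c = false.

Definition fails (F : tbf) (G : tanner) (Ve : {set 'I_(nv G)}) : Prop :=
  ~ converges F Ve.

Definition imV (U G : tanner) (fV : 'I_(nv U) -> 'I_(nv G)) : {set 'I_(nv G)} :=
  [set fV v | v : 'I_(nv U)].

Definition in_E (dv : nat) (F : tbf) (I S : tanner)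
    (gV : 'I_(nv I) -> 'I_(nv S)) (gC : 'I_(nc I) -> 'I_(nc S)) : Prop :=
  tanner_reg dv S /\ embedding gV gC /\ fails F (imV gV).

Definition trapping_set (dv : nat) (F : tbf) (I S : tanner) : Prop :=
  exists gV gC, @in_E dv F I S gV gC /\
    ~ exists (S2 : tanner) (gV2 : 'I_(nv I) -> 'I_(nv S2)) (gC2 : 'I_(nc I) -> 'I_(nc S2))
             (fV : 'I_(nv S2) -> 'I_(nv S)) (fC : 'I_(nc S2) -> 'I_(nc S)),
        [/\ in_E dv F gV2 gC2,
            embedding fV fC,
            ~ embedding_full fV fC
          & forall v, fV (gV2 v) \in imV gV].

(* Main.v *)
Require Import Defs.
From HB Require Import structures.
From mathcomp Require Import all_boot zify.
From Stdlib Require Import Classical.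
Set Implicit Arguments. Unset Strict Implicit. Unset Printing Implicit Defensive.

Lemma card_transfer (T U : finType) (f : T -> U) (P : pred U) :
  injective f -> (forall u, P u -> exists t, f t = u) ->
  #|[set t | P (f t)]| = #|[set u | P u]|.
Proof.
move=> inj H; rewrite -(card_imset _ inj); apply: eq_card => u.
rewrite inE; apply/imsetP/idP.
  by case=> t; rewrite inE => Pt ->.
by move=> Pu; case: (H u Pu) => t ft; exists t; rewrite ?inE ft.
Qed.

Definition wnext (F : tbf) (G : tanner) (z : 'I_(nc G) -> cstate)
  (w : 'I_(nv G) -> vstate) : 'I_(nv G) -> vstate :=
  fun v => tbf_f F (w v) (chi z v C0p) (chi z v C0n) (chi z v C1p) (chi z v C1n).

Lemma runS F G (Ve : {set 'I_(nv G)}) l : run F Ve l.+1 =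
  (wnext F (run F Ve l).1.2 (run F Ve l).1.1,
   fun c => Phi ((run F Ve l).2 c)
     (syndrome (fun v => vbit (wnext F (run F Ve l).1.2 (run F Ve l).1.1 v)) c),
   syndrome (fun v => vbit (wnext F (run F Ve l).1.2 (run F Ve l).1.1 v))).
Proof. by rewrite /=; case: (run F Ve l) => [[w z] s]. Qed.

Lemma run_syn F G (Ve : {set 'I_(nv G)}) l :
  (run F Ve l).2 = syndrome (fun v => vbit ((run F Ve l).1.1 v)).
Proof. by case: l => [|l] //; rewrite runS. Qed.

Section Transfer.
Variables (F : tbf) (A B : tanner) (VeA : {set 'I_(nv A)}) (VeB : {set 'I_(nv B)}).
Variables (fV : 'I_(nv B) -> 'I_(nv A)) (fC : 'I_(nc B) -> 'I_(nc A)).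
Hypotheses (bV : bijective fV) (iC : injective fC)
  (hadj : forall v c, adj v c = adj (fV v) (fC c))
  (hiso : forall v c', adj v c' -> exists c, fC c = c')
  (hVe : forall v, (v \in VeB) = (fV v \in VeA)).

Lemma syn_transfer xB xA : (forall v, xB v = xA (fV v)) ->
  forall c, syndrome xB c = syndrome xA (fC c).
Proof.
move=> hx c; rewrite /syndrome.
congr odd.
transitivity #|[set v | (fun v' => adj v' (fC c) && xA v') (fV v)]|.
  by apply: eq_card => v; rewrite !inE hadj hx.
apply: card_transfer; first exact: bij_inj.
by case: bV => g _ gK u _; exists (g u); rewrite gK.
Qed.

Lemma chi_transfer zB zA : (forall c, zB c = zA (fC c)) ->
  forall v a, chi zB v a = chi zA (fV v) a.
Proof.
move=> hz v a; rewrite /chi.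
transitivity #|[set c | (fun c' => adj (fV v) c' && (zA c' == a)) (fC c)]|.
  by apply: eq_card => c; rewrite !inE hadj hz.
apply: card_transfer => // u /andP [h _]; exact: hiso h.
Qed.

Lemma run_transfer l :
  [/\ forall v, (run F VeB l).1.1 v = (run F VeA l).1.1 (fV v),
      forall c, (run F VeB l).1.2 c = (run F VeA l).1.2 (fC c)
    & forall c, (run F VeB l).2 c = (run F VeA l).2 (fC c)].
Proof.
elim: l => [|l [IHw IHz IHs]].
  have hw : forall v, tbf_dV F (v \in VeB) = tbf_dV F (fV v \in VeA)
    by move=> v; rewrite hVe.
  have hs := syn_transfer (xB := fun v => vbit (tbf_dV F (v \in VeB)))
               (xA := fun v => vbit (tbf_dV F (v \in VeA))) (fun v => congr1 vbit (hw v)).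
  by split => //= c; rewrite hs.
have hw : forall v, wnext F (run F VeB l).1.2 (run F VeB l).1.1 v =
                    wnext F (run F VeA l).1.2 (run F VeA l).1.1 (fV v).
  by move=> v; rewrite /wnext IHw !(chi_transfer IHz).
have hs := syn_transfer (xA := fun v => vbit (wnext F (run F VeA l).1.2 (run F VeA l).1.1 v)) (fun v => congr1 vbit (hw v)).
by rewrite !runS; split => //= c; rewrite hs IHs.
Qed.
End Transfer.

Definition tsize (S : tanner) : nat :=
  nv S + nc S + #|[set p : 'I_(nv S) * 'I_(nc S) | adj p.1 p.2]|.

Lemma size_lt (U S : tanner) fV fC : @embedding U S fV fC ->
  ~ embedding_full fV fC -> tsize U < tsize S.
Proof.
move=> [iV [iC he]] nf; rewrite /tsize.
set EU := [set p : 'I_(nv U) * 'I_(nc U) | adj p.1 p.2].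
set ES := [set p : 'I_(nv S) * 'I_(nc S) | adj p.1 p.2].
pose g := fun p : 'I_(nv U) * 'I_(nc U) => (fV p.1, fC p.2).
have ig : injective g by move=> [a b] [c d] [/iV -> /iC ->].
have sub : g @: EU \subset ES.
  by apply/subsetP => q /imsetP [p]; rewrite inE => h ->; rewrite inE; apply: he.
have hV := leq_card _ iV; have hC := leq_card _ iC; rewrite !card_ord in hV hC.
have hE : #|EU| <= #|ES| by rewrite -(card_imset _ ig); apply: subset_leq_card.
rewrite ltnNge; apply/negP => hle; apply: nf.
have eV : nv S <= nv U by lia.
have eC : nc S <= nc U by lia.
have eE : #|ES| <= #|g @: EU| by rewrite card_imset //; lia.
split; [|split].
- move=> v; have := inj_card_onto (f:=fV) iV; rewrite !card_ord => /(_ eV v) /codomP [x ->].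
  by exists x.
- move=> c; have := inj_card_onto (f:=fC) iC; rewrite !card_ord => /(_ eC c) /codomP [x ->].
  by exists x.
- move=> v c h.
  have : (v, c) \in g @: EU.
    have /eqP -> : g @: EU == ES by rewrite eqEcard sub.
    by rewrite inE.
  case/imsetP => [[a b]]; rewrite inE /g /= => hab [-> ->].
  by exists a, b.
Qed.

Definition fam dv F (G : tanner) (Ve : {set 'I_(nv G)}) (S : tanner)
  (gV : 'I_(nv (induced Ve)) -> 'I_(nv S)) (gC : 'I_(nc (induced Ve)) -> 'I_(nc S))
  (hV : 'I_(nv S) -> 'I_(nv G)) (hC : 'I_(nc S) -> 'I_(nc G)) : Prop :=
  @in_E dv F (induced Ve) S gV gC /\ embedding hV hC /\ forall v, hV (gV v) \in Ve.

Lemma min_fam dv F G Ve :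
  (exists S gV gC hV hC, @fam dv F G Ve S gV gC hV hC) ->
  exists S gV gC hV hC, @fam dv F G Ve S gV gC hV hC /\
    forall S' gV' gC' hV' hC', @fam dv F G Ve S' gV' gC' hV' hC' -> ~ tsize S' < tsize S.
Proof.
move=> [S H].
move: {2}(tsize S) (erefl (tsize S)) => n.
elim/ltn_ind: n S H => n IH S [gV [gC [hV [hC Hf]]]] Hn.
case: (classic (exists S' gV' gC' hV' hC', @fam dv F G Ve S' gV' gC' hV' hC' /\ tsize S' < tsize S)).
  case=> S' [gV' [gC' [hV' [hC' [Hf' Hlt]]]]].
  apply: (IH (tsize S') _ S') => //; first by rewrite -Hn.
  by exists gV', gC', hV', hC'.
move=> Hno; exists S, gV, gC, hV, hC; split=> // S' gV' gC' hV' hC' Hf' Hlt.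
by apply: Hno; exists S', gV', gC', hV', hC'.
Qed.

Lemma trap_part dv F G Ve S gV gC hV hC :
  @fam dv F G Ve S gV gC hV hC ->
  (forall S' gV' gC' hV' hC', @fam dv F G Ve S' gV' gC' hV' hC' -> ~ tsize S' < tsize S) ->
  ~ exists (S2 : tanner) (gV2 : 'I_(nv (induced Ve)) -> 'I_(nv S2))
           (gC2 : 'I_(nc (induced Ve)) -> 'I_(nc S2))
           (fV : 'I_(nv S2) -> 'I_(nv S)) (fC : 'I_(nc S2) -> 'I_(nc S)),
        [/\ in_E dv F gV2 gC2, embedding fV fC, ~ embedding_full fV fC
          & forall v, fV (gV2 v) \in imV gV].
Proof.
move=> [HE [[jV [jC e']] HJ0]] Hmin [S2 [gV2 [gC2 [fV [fC [HE2 Hemb Hnf HJ]]]]]].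
apply: (Hmin S2 gV2 gC2 (hV \o fV) (hC \o fC)); last exact: size_lt Hemb Hnf.
split => //; split.
  case: Hemb => iV [iC e]; split; first exact: inj_comp.
  split; first exact: inj_comp.
  by move=> v c h; apply: e'; apply: e.
by move=> v /=; have /imsetP [u _ ->] := HJ v; apply: HJ0.
Qed.

Lemma reg_emb dv (S G : tanner) hV hC : tanner_reg dv S -> tanner_reg dv G ->
  @embedding S G hV hC -> forall v c', adj (hV v) c' -> exists c, hC c = c' /\ adj v c.
Proof.
move=> RS RG [iV [iC he]] v c' h.
have sub : hC @: [set c | adj v c] \subset [set c | adj (hV v) c].
  apply/subsetP => x; case/imsetP => c; rewrite inE => hc ->; rewrite inE; apply: he; exact: hc.
have /eqP E : hC @: [set c | adj v c] == [set c | adj (hV v) c].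
  by rewrite eqEcard sub card_imset // (RS v) (RG (hV v)) leqnn.
have : c' \in [set c | adj (hV v) c] by rewrite inE.
by rewrite -E => /imsetP [c]; rewrite inE => hc ->; exists c.
Qed.

Lemma induced_checks (G : tanner) (Ve : {set 'I_(nv G)}) (c : 'I_(nc (induced Ve))) :
  exists u : 'I_(nv (induced Ve)), adj u c.
Proof.
have := enum_valP c; rewrite inE => /existsP [v /andP [hv ha]].
exists (enum_rank_in hv v); rewrite /= (enum_rankK_in hv hv); exact: ha.
Qed.

Lemma no_isolated dv F (G : tanner) (Ve : {set 'I_(nv G)}) S gV gC :
  @in_E dv F (induced Ve) S gV gC ->
  (~ exists (S2 : tanner) (gV2 : 'I_(nv (induced Ve)) -> 'I_(nv S2))
           (gC2 : 'I_(nc (induced Ve)) -> 'I_(nc S2))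
           (fV : 'I_(nv S2) -> 'I_(nv S)) (fC : 'I_(nc S2) -> 'I_(nc S)),
        [/\ in_E dv F gV2 gC2, embedding fV fC, ~ embedding_full fV fC
          & forall v, fV (gV2 v) \in imV gV]) ->
  forall c0 : 'I_(nc S), exists v, adj v c0.
Proof.
move=> [Hreg [[iV [iC Hemb]] Hfail]] Hno c0.
apply: NNPP => Hiso.
have iso : forall v, ~~ adj v c0 by move=> v; apply/negP => h; apply: Hiso; exists v.
pose K := [set c | c != c0].
pose S2 := @Tanner (nv S) #|K| (fun v i => adj v (enum_val i)).
have gCK : forall c, gC c \in K.
  move=> c; case: (induced_checks c) => u hu.
  rewrite inE; apply/eqP => e; move: (iso (gV u)); rewrite -e Hemb //.
pose gC2 := fun c => enum_rank_in (gCK c) (gC c) : 'I_(nc S2).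
have gC2E : forall c, enum_val (gC2 c) = gC c.
  by move=> c; rewrite /gC2 (enum_rankK_in (gCK c) (gCK c)).
have hK : forall v (c' : 'I_(nc S)), adj v c' -> exists c : 'I_#|K|, enum_val c = c'.
  move=> v c' h; have hc : c' \in K by rewrite inE; apply/eqP => e; move: (iso v); rewrite -e h.
  by exists (enum_rank_in hc c'); rewrite (enum_rankK_in hc hc).
apply: Hno; exists S2, (gV : 'I_(nv (induced Ve)) -> 'I_(nv S2)), gC2, id, (@enum_val _ K).
split.
- split.
    move=> v; rewrite -(Hreg v).
    transitivity #|[set c : 'I_#|K| | (fun c' => @adj S v c') (enum_val c)]|.
      by apply: eq_card => c; rewrite !inE.
    apply: card_transfer.
      exact: enum_val_inj.
    move=> u h; exact: hK h.
  split.
    split=> //; split.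
      by move=> a b h; apply: iC; rewrite -gC2E h gC2E.
    by move=> v c h /=; rewrite gC2E; apply: Hemb.
  move=> [l [hl Hc]]; apply: Hfail; exists l; split=> // c.
  case: (c =P c0) => [->|ne].
    rewrite /syn_at run_syn /syndrome.
    have -> : [set v | adj v c0 & vbit ((run F (imV gV) l).1.1 v)] = set0.
      by apply/setP => v; rewrite !inE (negbTE (iso v)).
    by rewrite cards0.
  have hc : c \in K by rewrite inE; apply/eqP.
  rewrite -(enum_rankK_in hc hc).
  have bid : bijective (id : 'I_(nv S2) -> 'I_(nv S)) by exists id.
  have [_ _ T3] := @run_transfer F S S2 (imV gV) (imV (gV : 'I_(nv (induced Ve)) -> 'I_(nv S2)))
     id (@enum_val _ K) bid
     (@enum_val_inj _ K) (fun _ _ => erefl) hK (fun _ => erefl) l.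
  rewrite /syn_at -T3; exact: Hc.
- split=> //; split; [exact: enum_val_inj | by []].
- case=> _ [hc _]; case: (hc c0) => i hi; have := enum_valP i; by rewrite hi inE eqxx.
- by move=> v; apply: imset_f.
Qed.

Theorem proposition2 (dv : nat) (F : tbf) (HF : tbf_valid dv F)
    (G : tanner) (HG : tanner_reg dv G) (Ve : {set 'I_(nv G)}) :
  ~ (exists Vs : {set 'I_(nv G)}, Ve \subset Vs /\
       exists S : tanner, trapping_set dv F (induced Ve) S /\
                          isomorphic (induced Vs) S) ->
  converges F Ve.
Proof.
move=> Hno; apply: NNPP => Hfail.
have Hfam : exists S gV gC hV hC, @fam dv F G Ve S gV gC hV hC.
  exists G, (fun i : 'I_(nv (induced Ve)) => enum_val i),
    (fun j : 'I_(nc (induced Ve)) => enum_val j), id, id.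
  split; [split; [exact: HG | split] | split].
  - by split; [exact: enum_val_inj | split; [exact: enum_val_inj | by []]].
  - have -> : imV (fun i : 'I_(nv (induced Ve)) => enum_val i) = Ve.
      apply/setP => x; apply/imsetP/idP => [[i _ ->]|hx]; first exact: enum_valP.
      by exists (enum_rank_in hx x); rewrite ?(enum_rankK_in hx hx).
    exact: Hfail.
  - by split=> //; split.
  - by move=> v; apply: enum_valP.
case: (min_fam Hfam) => S [gV [gC [hV [hC [Hf Hmin]]]]].
have Hnot := trap_part Hf Hmin.
have Hnis := no_isolated Hf.1 Hnot.
have HinE := Hf.1.
case: Hf => [[RS [[iV0 [iC0 e0]] _]] [[iV [iC he]] HJ]].
apply: Hno; exists (imV hV); split.
  pose k := fun u : 'I_(nv (induced Ve)) => hV (gV u).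
  have ik : injective k by move=> a b /iV /iV0.
  have E : [set k u | u : 'I_(nv (induced Ve))] = Ve.
    apply/eqP; rewrite eqEcard; apply/andP; split.
      by apply/subsetP => y /imsetP [u _ ->]; apply: HJ.
    by rewrite card_imset // card_ord.
  apply/subsetP => x; rewrite -E => /imsetP [u _ ->]; exact: imset_f.
exists S; split; first by exists gV, gC.
set Vs := imV hV.
have memV : forall v, hV v \in Vs by move=> v; apply: imset_f.
have memC : forall c, hC c \in nbhd Vs.
  move=> c; case: (Hnis c) => v hvc; rewrite inE; apply/existsP; exists (hV v).
  by rewrite memV /=; apply: he.
have exV : forall i : 'I_#|Vs|, exists v, hV v == enum_val i.
  by move=> i; have /imsetP [v _ ->] := enum_valP i; exists v.
have exC : forall j : 'I_#|nbhd Vs|, exists c, hC c == enum_val j.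
  move=> j; have := enum_valP j; rewrite inE => /existsP [x /andP [hx ha]].
  case/imsetP: hx => v _ ex; rewrite ex in ha.
  by case: (reg_emb RS HG (conj iV (conj iC he)) ha) => c [hc _]; exists c; rewrite hc.
pose fV := fun i => xchoose (exV i).
pose fC := fun j => xchoose (exC j).
have fVE : forall i, hV (fV i) = enum_val i by move=> i; exact/eqP/(xchooseP (exV i)).
have fCE : forall j, hC (fC j) = enum_val j by move=> j; exact/eqP/(xchooseP (exC j)).
exists fV, fC; split; [|split].
- exists (fun v => enum_rank_in (memV v) (hV v)).
    by move=> i; apply: enum_val_inj; rewrite (enum_rankK_in (memV _) (memV _)) fVE.
  by move=> v; apply: iV; rewrite fVE (enum_rankK_in (memV _) (memV _)).
- exists (fun c => enum_rank_in (memC c) (hC c)).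
    by move=> j; apply: enum_val_inj; rewrite (enum_rankK_in (memC _) (memC _)) fCE.
  by move=> c; apply: iC; rewrite fCE (enum_rankK_in (memC _) (memC _)).
- move=> i j /=; rewrite -fVE -fCE; apply/idP/idP => h; last exact: he.
  case: (reg_emb RS HG (conj iV (conj iC he)) h) => c [/iC <- //].
Qed.
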